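(* The equation $x^2+y^2+z^2-xyz=4+rl^2$ has no solution $(x,y,z)\in\mathbb Z^3$ in each of the following cases: (i) $r=2$ and $l\ge13$ is a prime with $l\equiv\pm4\bmod9$; (ii) $r=12$ and $l\ge37$ is a prime with $l^2\equiv25\bmod32$ and $1+3l^2$ not a sum of two integer squares; (iii) $r=-2$ and $l\ge13$ is a prime; (iv) $r=-3$ and $l\ge17$ is a prime; (v) $r=-12$ and $l\ge37$ is a prime. *)

(* Defs.v *)
From mathcomp Require Import all_boot all_algebra.
Set Implicit Arguments. Unset Strict Implicit. Unset Printing Implicit Defensive.
Import GRing.Theory Num.Theory.
Local Open Scope ring_scope.

Definition sum_two_sq (n : int) : Prop := exists a b : int, n = a ^+ 2 + b ^+ 2.

Definition has_int_sol (r : int) (l : nat) : Prop :=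
  exists x y z : int, x ^+ 2 + y ^+ 2 + z ^+ 2 - x * y * z = 4 + r * (l%:Z) ^+ 2.

(* Main.v *)
From Stdlib Require Import ZArith Lia Znumtheory List Classical Zdiv.

Module ZD.
Local Open Scope Z_scope. Local Open Scope bool_scope.

Definition rng (M : Z) : list Z := List.map Z.of_nat (List.seq 0 (Z.to_nat M)).
Lemma in_rng M v : 0 <= v < M -> In v (rng M).
Proof. intros H. unfold rng. apply in_map_iff. exists (Z.to_nat v). split.
 - apply Z2Nat.id; lia.
 - apply in_seq. lia. Qed.

Ltac eqm_tac := repeat (apply Zminus_eqm || apply Zplus_eqm || apply Zmult_eqm || apply Zopp_eqm);
  first [apply eqm_refl | apply eqm_sym, Zmod_eqm].

Definition chk3 (N : Z) (F : Z -> Z -> Z -> Z) (C : Z -> Z -> Z -> bool) : bool :=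
  let R := rng N in
  forallb (fun x => forallb (fun y => forallb (fun z => negb (F x y z mod N =? 0) || C x y z) R) R) R.

Lemma chk3_sound N F C : 0 < N -> chk3 N F C = true ->
  (forall x y z, eqm N (F x y z) (F (x mod N) (y mod N) (z mod N))) ->
  forall x y z, F x y z mod N = 0 -> C (x mod N) (y mod N) (z mod N) = true.
Proof.
 intros HN Hc Hm x y z H. unfold chk3 in Hc. rewrite forallb_forall in Hc.
 specialize (Hc _ (in_rng _ _ (Z.mod_pos_bound x N HN))).
 rewrite forallb_forall in Hc. specialize (Hc _ (in_rng _ _ (Z.mod_pos_bound y N HN))).
 rewrite forallb_forall in Hc. specialize (Hc _ (in_rng _ _ (Z.mod_pos_bound z N HN))).
 specialize (Hm x y z). unfold eqm in Hm. rewrite <- Hm, H in Hc. exact Hc.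
Qed.

Definition P3 x y z := x*x+y*y+z*z-x*y*z.

Definition loc2 (n : Z) (K : Z) (S : Z -> bool) : bool :=
  let M := 2^n in let R := rng M in let m := M - 1 in
  forallb (fun x => S x || let xx := x*x - K in forallb (fun y => let A := x*y in let B := xx + y*y in
     forallb (fun z => negb (Z.land (z*(z-A)+B) m =? 0)) R) R) R.

Lemma loc2_sound n K S : 0 <= n -> loc2 n K S = true ->
  forall x y z, (P3 x y z - K) mod 2^n = 0 -> S (x mod 2^n) = true.
Proof.
 intros Hn Hc x y z H. assert (HN : 0 < 2^n) by (apply Z.pow_pos_nonneg; lia).
 unfold loc2 in Hc. rewrite forallb_forall in Hc.
 specialize (Hc _ (in_rng _ _ (Z.mod_pos_bound x _ HN))).
 apply Bool.orb_true_iff in Hc as [Hc|Hc]; [exact Hc|]. exfalso.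
 rewrite forallb_forall in Hc. specialize (Hc _ (in_rng _ _ (Z.mod_pos_bound y _ HN))).
 rewrite forallb_forall in Hc. specialize (Hc _ (in_rng _ _ (Z.mod_pos_bound z _ HN))).
 assert (E : Z.land (z mod 2 ^ n * (z mod 2 ^ n - x mod 2 ^ n * (y mod 2 ^ n)) +
          (x mod 2 ^ n * (x mod 2 ^ n) - K + y mod 2 ^ n * (y mod 2 ^ n))) (2 ^ n - 1) = 0).
 { replace (2^n - 1) with (Z.ones n) by (rewrite Z.ones_equiv; lia).
   rewrite Z.land_ones by lia.
   assert (Hm : eqm (2^n) (P3 x y z - K) (z mod 2 ^ n * (z mod 2 ^ n - x mod 2 ^ n * (y mod 2 ^ n)) +
          (x mod 2 ^ n * (x mod 2 ^ n) - K + y mod 2 ^ n * (y mod 2 ^ n)))).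
   { apply eqm_trans with (P3 (x mod 2^n) (y mod 2^n) (z mod 2^n) - K).
     - unfold P3. eqm_tac.
     - unfold P3. replace (_ - K) with (z mod 2 ^ n * (z mod 2 ^ n - x mod 2 ^ n * (y mod 2 ^ n)) +
          (x mod 2 ^ n * (x mod 2 ^ n) - K + y mod 2 ^ n * (y mod 2 ^ n))) by ring. apply eqm_refl. }
   unfold eqm in Hm. rewrite <- Hm. exact H. }
 rewrite E in Hc. discriminate.
Qed.
Lemma pigeon : forall (N n : nat) (f : nat -> nat), (N < n)%nat -> (forall i, (i < n)%nat -> (f i < N)%nat) ->
  exists i j, (i < j < n)%nat /\ f i = f j.
Proof.
 induction N as [|N IH]; intros n f Hn Hf.
 - specialize (Hf 0%nat ltac:(lia)). lia.
 - destruct n as [|n]; [lia|].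
   destruct (classic (exists i, (i < n)%nat /\ f i = f n)) as [[i [Hi Hfi]]|Hno].
   + exists i, n. split; [lia|exact Hfi].
   + set (g := fun i => if Nat.ltb (f i) (f n) then f i else Nat.pred (f i)).
     destruct (IH n g ltac:(lia)) as [i [j [Hij Hg]]].
     * intros i Hi. unfold g. assert (f i <> f n) by (intro; apply Hno; eauto).
       pose proof (Hf i ltac:(lia)). pose proof (Hf n ltac:(lia)).
       destruct (Nat.ltb_spec (f i) (f n)); lia.
     * exists i, j. split; [lia|].
       assert (f i <> f n) by (intro; apply Hno; exists i; split; [lia|auto]).
       assert (f j <> f n) by (intro; apply Hno; exists j; split; [lia|auto]).
       unfold g in Hg. destruct (Nat.ltb_spec (f i) (f n)); destruct (Nat.ltb_spec (f j) (f n)); lia.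
Qed.

Lemma thue : forall p c, 1 < p -> exists s t, (s <> 0 \/ t <> 0) /\ Z.abs s <= Z.sqrt p /\ Z.abs t <= Z.sqrt p /\ (p | s - c * t).
Proof.
 intros p c Hp.
 set (m := Z.sqrt p). assert (Hm := Z.sqrt_spec p ltac:(lia)). fold m in Hm. cbv zeta in Hm.
 assert (Hm0 : 0 <= m) by (apply Z.sqrt_nonneg).
 set (m' := S (Z.to_nat m)).
 set (f := fun idx : nat => Z.to_nat ((Z.of_nat (idx / m') - c * Z.of_nat (idx mod m')) mod p)).
 destruct (pigeon (Z.to_nat p) (m' * m') f) as [i [j [Hij Hf]]].
 - unfold m'. assert (Z.of_nat (Z.to_nat p) < Z.of_nat (S (Z.to_nat m) * S (Z.to_nat m))); [|lia].
   rewrite Nat2Z.inj_mul, !Nat2Z.inj_succ, !Z2Nat.id by lia. cbv zeta in Hm; lia.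
 - intros i Hi. unfold f. assert (H := Z.mod_pos_bound (Z.of_nat (i / m') - c * Z.of_nat (i mod m')) p ltac:(lia)).
   apply Nat2Z.inj_lt. rewrite Z2Nat.id by lia. rewrite Z2Nat.id by lia. lia.
 - unfold f in Hf.
   set (u := (Z.of_nat (i / m') - c * Z.of_nat (i mod m'))) in Hf.
   set (v := (Z.of_nat (j / m') - c * Z.of_nat (j mod m'))) in Hf.
   assert (Hu := Z.mod_pos_bound u p ltac:(lia)). assert (Hv := Z.mod_pos_bound v p ltac:(lia)).
   apply Z2Nat.inj in Hf; [|lia|lia].
   assert (Hm'0 : (m' <> 0)%nat) by (unfold m'; lia).
   assert (Hdi := Nat.div_mod i m' Hm'0). assert (Hdj := Nat.div_mod j m' Hm'0).
   assert (Hmi := Nat.mod_upper_bound i m' Hm'0). assert (Hmj := Nat.mod_upper_bound j m' Hm'0).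
   assert (Hqi : (i / m' < m')%nat) by (apply Nat.Div0.div_lt_upper_bound; lia).
   assert (Hqj : (j / m' < m')%nat) by (apply Nat.Div0.div_lt_upper_bound; lia).
   assert (Hm'Z : Z.of_nat m' = m + 1) by (unfold m'; rewrite Nat2Z.inj_succ, Z2Nat.id; lia).
   exists (Z.of_nat (i / m') - Z.of_nat (j / m')), (Z.of_nat (i mod m') - Z.of_nat (j mod m')).
   split; [|split; [|split]].
   + destruct (Nat.eq_dec (i / m') (j / m')) as [E|E]; [right|left]; [|lia].
     intro H. assert ((i mod m')%nat = (j mod m')%nat) by lia. rewrite Hdi, Hdj in Hij. lia.
   + lia.
   + lia.
   + apply Z.mod_divide; [lia|].
     replace (Z.of_nat (i / m') - Z.of_nat (j / m') - c * (Z.of_nat (i mod m') - Z.of_nat (j mod m'))) with (u - v) by (unfold u, v; ring).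
     rewrite Zminus_mod, Hf, Z.sub_diag. reflexivity.
Qed.

Lemma nonsq q : prime q -> forall s t, s*s = q*(t*t) -> t = 0.
Proof.
 intros Hq. assert (Hq2 := prime_ge_2 q Hq).
 assert (H : forall n : nat, forall s t, Z.abs t < Z.of_nat n -> s*s = q*(t*t) -> t = 0).
 { induction n as [|n IH]; intros s t Ht E; [lia|].
   assert (Hs : (q | s)).
   { destruct (prime_mult q Hq s s) as [H|H]; auto. exists (t*t). lia. }
   destruct Hs as [s1 Hs1]. subst s.
   assert (E1 : q*(s1*s1) = t*t) by (apply Z.mul_reg_l with q; [lia| nia]).
   assert (Ht1 : (q | t)).
   { destruct (prime_mult q Hq t t) as [H|H]; auto. exists (s1*s1). lia. }
   destruct Ht1 as [t1 Ht1]. subst t.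
   assert (E2 : s1*s1 = q*(t1*t1)) by (apply Z.mul_reg_l with q; [lia| nia]).
   assert (t1 = 0).
   { destruct (Z.eq_dec t1 0) as [->|Hne]; [reflexivity|]. apply (IH s1 t1); [|exact E2].
     rewrite Z.abs_mul, Nat2Z.inj_succ in Ht. assert (Z.abs q = q) by lia. assert (0 < Z.abs t1) by lia. nia. }
   subst. ring. }
 intros s t E. apply (H (S (Z.to_nat (Z.abs t))) s t); [lia|exact E].
Qed.

Lemma qr_gen p r A B : prime p -> (p | A*A - r*B*B) -> ~ (p | B) ->
  exists s t, t <> 0 /\ s*s < p /\ t*t < p /\ (p | s*s - r*t*t).
Proof.
 intros Hp HA HB. assert (Hp2 := prime_ge_2 p Hp).
 destruct (rel_prime_bezout _ _ (prime_rel_prime p Hp B HB)) as [u v Huv].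
 destruct (thue p (A*v) ltac:(lia)) as [s [t [Hst [Hs [Ht Hd]]]]].
 set (m := Z.sqrt p) in *.
 assert (Hm := Z.sqrt_spec p ltac:(lia)). fold m in Hm. cbv zeta in Hm.
 assert (Hmp : m*m <> p) by (intro E; apply (square_not_prime m); rewrite E; exact Hp).
 assert (Hm2 : m*m < p) by lia.
 assert (Hm0 : 0 <= m) by apply Z.sqrt_nonneg.
 assert (Hmp' : m < p) by nia.
 assert (Ht0 : t <> 0).
 { intro E. subst t. destruct Hst as [Hs0|Hs0]; [|lia]. destruct Hd as [k Hk].
   rewrite Z.mul_0_r, Z.sub_0_r in Hk. subst s. rewrite Z.abs_mul in Hs.
   assert (Z.abs k >= 1) by (destruct (Z.eq_dec k 0); subst; lia). nia. }
 exists s, t. split; [exact Ht0|]. split; [nia|]. split; [nia|].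
 assert (E : s*s - r*t*t = (s - A*v*t)*(s + A*v*t) + t*t*v*v*(A*A - r*B*B) - t*t*r*u*p*(v*B+1)
             + t*t*r*(u*p + v*B - 1)*(v*B+1)) by ring.
 rewrite Huv, Z.sub_diag, Z.mul_0_r, Z.mul_0_l, Z.add_0_r in E. rewrite E.
 apply Z.divide_sub_r; [apply Z.divide_add_r|].
 - apply Z.divide_mul_l. exact Hd.
 - apply Z.divide_mul_r. exact HA.
 - apply Z.divide_mul_l. apply Z.divide_mul_r. apply Z.divide_refl.
Qed.

Definition chkQ (N r j : Z) (adm G : Z -> bool) : bool :=
 let R := rng N in forallb (fun s => forallb (fun t =>
   let v := (s*s - r*t*t) mod N in
   negb (v mod (Z.abs j) =? 0) || (let p0 := (v / j) mod 24 in negb (adm p0) || G p0)) R) R.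

Lemma chkQ_sound N r j adm G : N = 24 * Z.abs j -> j <> 0 -> chkQ N r j adm G = true ->
  forall s t p, s*s - r*t*t = j*p -> adm (p mod 24) = true -> G (p mod 24) = true.
Proof.
 intros HN Hj Hc s t p E Ha. assert (HN0 : 0 < N) by lia.
 unfold chkQ in Hc. rewrite forallb_forall in Hc.
 specialize (Hc _ (in_rng _ _ (Z.mod_pos_bound s N HN0))).
 rewrite forallb_forall in Hc. specialize (Hc _ (in_rng _ _ (Z.mod_pos_bound t N HN0))).
 set (v := ((s mod N)*(s mod N) - r*(t mod N)*(t mod N)) mod N) in Hc.
 assert (Hv : (v - j*p) mod N = 0).
 { unfold v. rewrite Zminus_mod_idemp_l.
   assert (H : eqm N ((s mod N)*(s mod N) - r*(t mod N)*(t mod N) - j*p) (j*p - j*p)).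
   { apply Zminus_eqm; [|apply eqm_refl]. rewrite <- E. apply eqm_sym. eqm_tac. }
   unfold eqm in H. rewrite H, Z.sub_diag. reflexivity. }
 apply Z.mod_divide in Hv; [|lia]. destruct Hv as [q Hq].
 assert (Hw : exists w, v = j * w /\ w mod 24 = p mod 24).
 { destruct (Z.abs_spec j) as [[Hj0 Ha']|[Hj0 Ha']]; rewrite Ha' in HN; subst N.
   - exists (p + 24*q). split; [lia|]. replace (p + 24*q) with (p + q*24) by ring. rewrite Z_mod_plus_full. reflexivity.
   - exists (p - 24*q). split; [lia|].
     replace (p - 24*q) with (p + (-q)*24) by ring. rewrite Z_mod_plus_full. reflexivity. }
 destruct Hw as [w [Hvw Hw]].
 rewrite Hvw in Hc.
 assert (E1 : (j * w) mod Z.abs j = 0).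
 { destruct (Z.abs_spec j) as [[Hj0 ->]|[Hj0 ->]].
   - rewrite Z.mul_comm. apply Z_mod_mult.
   - replace (j*w) with ((-w)*(-j)) by ring. apply Z_mod_mult. }
 rewrite E1 in Hc. rewrite Z.mul_comm, Z.div_mul in Hc by exact Hj. rewrite Hw, Ha in Hc.
 simpl in Hc. exact Hc.
Qed.

Definition adm2 (z : Z) := z mod 2 =? 1.
Definition adm6 (z : Z) := (z mod 2 =? 1) && negb (z mod 3 =? 0).
Definition G_p2 (z : Z) := (z mod 8 =? 1) || (z mod 8 =? 7).
Definition G_m2 (z : Z) := (z mod 8 =? 1) || (z mod 8 =? 3).
Definition G_p3 (z : Z) := (z mod 12 =? 1) || (z mod 12 =? 11).
Definition G_m3 (z : Z) := (z mod 6 =? 1).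

Lemma prime_odd p : prime p -> p <> 2 -> p mod 2 = 1.
Proof. intros Hp H2. assert (Hp2 := prime_ge_2 p Hp).
 destruct (Z.eq_dec (p mod 2) 0) as [E|E]; [|assert (Hb := Z.mod_pos_bound p 2); lia].
 apply Z.mod_divide in E; [|lia]. destruct (prime_divisors p Hp 2 E); lia. Qed.
Lemma prime_not3 p : prime p -> p <> 3 -> p mod 3 <> 0.
Proof. intros Hp H3 E. assert (Hp2 := prime_ge_2 p Hp).
 apply Z.mod_divide in E; [|lia]. destruct (prime_divisors p Hp 3 E); lia. Qed.

Lemma adm2_p p : prime p -> p <> 2 -> adm2 (p mod 24) = true.
Proof. intros Hp H2. unfold adm2. rewrite <- Zmod_div_mod by (try lia; exists 12; lia).
 rewrite (prime_odd p Hp H2). reflexivity. Qed.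
Lemma adm6_p p : prime p -> p <> 2 -> p <> 3 -> adm6 (p mod 24) = true.
Proof. intros Hp H2 H3. unfold adm6. rewrite <- !Zmod_div_mod by (try lia; first [exists 12; lia | exists 8; lia]).
 rewrite (prime_odd p Hp H2). assert (H := prime_not3 p Hp H3).
 apply Z.eqb_neq in H. rewrite H. reflexivity. Qed.

Lemma cQ_p2_1 : chkQ 24 2 (-1) adm2 G_p2 = true. Proof. vm_compute. reflexivity. Qed.
Lemma cQ_m2_1 : chkQ 24 (-2) 1 adm2 G_m2 = true. Proof. vm_compute. reflexivity. Qed.
Lemma cQ_m2_2 : chkQ 48 (-2) 2 adm2 G_m2 = true. Proof. vm_compute. reflexivity. Qed.
Lemma cQ_p3_1 : chkQ 24 3 (-1) adm6 G_p3 = true. Proof. vm_compute. reflexivity. Qed.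
Lemma cQ_p3_2 : chkQ 48 3 (-2) adm6 G_p3 = true. Proof. vm_compute. reflexivity. Qed.
Lemma cQ_m3_1 : chkQ 24 (-3) 1 adm6 G_m3 = true. Proof. vm_compute. reflexivity. Qed.
Lemma cQ_m3_2 : chkQ 48 (-3) 2 adm6 G_m3 = true. Proof. vm_compute. reflexivity. Qed.
Lemma cQ_m3_3 : chkQ 72 (-3) 3 adm6 G_m3 = true. Proof. vm_compute. reflexivity. Qed.

Lemma class_p2 p A B : prime p -> p <> 2 -> (p | A*A - 2*B*B) -> ~ (p | B) -> G_p2 (p mod 24) = true.
Proof.
 intros Hp H2 HA HB. destruct (qr_gen p 2 A B Hp HA HB) as [s [t [Ht0 [Hs [Ht [j Hj]]]]]].
 assert (Hp2 := prime_ge_2 p Hp).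
 assert (Hj' : j = -1 \/ j = 0) by nia.
 destruct Hj' as [->| ->].
 - apply (chkQ_sound 24 2 (-1) adm2 G_p2 eq_refl ltac:(lia) cQ_p2_1 s t p); [lia|apply adm2_p; auto].
 - exfalso. apply Ht0. apply (nonsq 2 prime_2 s t). lia.
Qed.
Lemma class_m2 p A B : prime p -> p <> 2 -> (p | A*A - (-2)*B*B) -> ~ (p | B) -> G_m2 (p mod 24) = true.
Proof.
 intros Hp H2 HA HB. destruct (qr_gen p (-2) A B Hp HA HB) as [s [t [Ht0 [Hs [Ht [j Hj]]]]]].
 assert (Hp2 := prime_ge_2 p Hp).
 assert (Hj' : j = 1 \/ j = 2) by nia.
 destruct Hj' as [->| ->].
 - apply (chkQ_sound 24 (-2) 1 adm2 G_m2 eq_refl ltac:(lia) cQ_m2_1 s t p); [lia|apply adm2_p; auto].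
 - apply (chkQ_sound 48 (-2) 2 adm2 G_m2 eq_refl ltac:(lia) cQ_m2_2 s t p); [lia|apply adm2_p; auto].
Qed.
Lemma class_p3 p A B : prime p -> p <> 2 -> p <> 3 -> (p | A*A - 3*B*B) -> ~ (p | B) -> G_p3 (p mod 24) = true.
Proof.
 intros Hp H2 H3 HA HB. destruct (qr_gen p 3 A B Hp HA HB) as [s [t [Ht0 [Hs [Ht [j Hj]]]]]].
 assert (Hp2 := prime_ge_2 p Hp).
 assert (Hj' : j = -2 \/ j = -1 \/ j = 0) by nia.
 destruct Hj' as [->|[->| ->]].
 - apply (chkQ_sound 48 3 (-2) adm6 G_p3 eq_refl ltac:(lia) cQ_p3_2 s t p); [lia|apply adm6_p; auto].
 - apply (chkQ_sound 24 3 (-1) adm6 G_p3 eq_refl ltac:(lia) cQ_p3_1 s t p); [lia|apply adm6_p; auto].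
 - exfalso. apply Ht0. apply (nonsq 3 prime_3 s t). lia.
Qed.
Lemma class_m3 p A B : prime p -> p <> 2 -> p <> 3 -> (p | A*A - (-3)*B*B) -> ~ (p | B) -> G_m3 (p mod 24) = true.
Proof.
 intros Hp H2 H3 HA HB. destruct (qr_gen p (-3) A B Hp HA HB) as [s [t [Ht0 [Hs [Ht [j Hj]]]]]].
 assert (Hp2 := prime_ge_2 p Hp).
 assert (Hj' : j = 1 \/ j = 2 \/ j = 3) by nia.
 destruct Hj' as [->|[->| ->]].
 - apply (chkQ_sound 24 (-3) 1 adm6 G_m3 eq_refl ltac:(lia) cQ_m3_1 s t p); [lia|apply adm6_p; auto].
 - apply (chkQ_sound 48 (-3) 2 adm6 G_m3 eq_refl ltac:(lia) cQ_m3_2 s t p); [lia|apply adm6_p; auto].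
 - apply (chkQ_sound 72 (-3) 3 adm6 G_m3 eq_refl ltac:(lia) cQ_m3_3 s t p); [lia|apply adm6_p; auto].
Qed.

Definition Qp (t3 : bool) (G : Z -> bool) (n : Z) := exists e f m, 0 <= e /\ 0 <= f /\ (t3 = false -> f = 0) /\
  n = 2^e * 3^f * m /\ G (m mod 24) = true.

Definition Gcl (G : Z -> bool) := forallb (fun u => forallb (fun v => negb (G u && G v) || G ((u*v) mod 24)) (rng 24)) (rng 24).
Lemma Gcl_sound G : Gcl G = true -> forall u v, G (u mod 24) = true -> G (v mod 24) = true -> G ((u*v) mod 24) = true.
Proof.
 intros Hc u v Hu Hv. unfold Gcl in Hc. rewrite forallb_forall in Hc.
 specialize (Hc _ (in_rng _ _ (Z.mod_pos_bound u 24 ltac:(lia)))).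
 rewrite forallb_forall in Hc. specialize (Hc _ (in_rng _ _ (Z.mod_pos_bound v 24 ltac:(lia)))).
 rewrite Hu, Hv in Hc. simpl in Hc. rewrite Z.mul_mod by lia. exact Hc.
Qed.

Lemma Q_closure t3 G : Gcl G = true -> G 1 = true -> forall n, 0 < n ->
  (forall p, prime p -> (p | n) -> p <> 2 -> (t3 = true -> p <> 3) -> G (p mod 24) = true) -> Qp t3 G n.
Proof.
 intros HGc HG1.
 assert (H : forall N : nat, forall n, 0 < n <= Z.of_nat N ->
  (forall p, prime p -> (p | n) -> p <> 2 -> (t3 = true -> p <> 3) -> G (p mod 24) = true) -> Qp t3 G n).
 { induction N as [|N IH]; intros n Hn Hp; [lia|].
   destruct (Z.eq_dec n 1) as [->|Hn1].
   { exists 0, 0, 1. repeat split; try lia. exact HG1. }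
   destruct (prime_dec n) as [Hpr|Hnpr].
   - destruct (Z.eq_dec n 2) as [->|Hn2].
     { exists 1, 0, 1. repeat split; try lia. exact HG1. }
     destruct t3 eqn:Et3; [destruct (Z.eq_dec n 3) as [->|Hn3]|].
     + exists 0, 1, 1. repeat split; try lia; try discriminate. exact HG1.
     + exists 0, 0, n. repeat split; try lia. apply Hp; auto. apply Z.divide_refl.
     + exists 0, 0, n. repeat split; try lia. apply Hp; auto. apply Z.divide_refl. discriminate.
   - destruct (not_prime_divide n ltac:(lia) Hnpr) as [d [Hd [q Hq]]].
     assert (Hq1 : 1 < q < n) by nia.
     destruct (IH d ltac:(lia)) as [e1 [f1 [m1 [He1 [Hf1 [Ht1 [Hd1 HG1']]]]]]].
     { intros p Hpp Hpd. apply Hp; auto. apply Z.divide_trans with d; auto. exists q; exact Hq. }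
     destruct (IH q ltac:(lia)) as [e2 [f2 [m2 [He2 [Hf2 [Ht2 [Hd2 HG2']]]]]]].
     { intros p Hpp Hpd. apply Hp; auto. apply Z.divide_trans with q; auto. exists d; lia. }
     exists (e1+e2), (f1+f2), (m1*m2). repeat split; try lia.
     + intros E. rewrite (Ht1 E), (Ht2 E). reflexivity.
     + rewrite Hq, Hd1, Hd2, !Z.pow_add_r by lia. ring.
     + apply Gcl_sound; auto. }
 intros n Hn Hp. apply (H (Z.to_nat n)); auto. lia.
Qed.

Definition qres (t3 : bool) (G : Z -> bool) (c : Z) : bool :=
 (c mod 32 =? 0) || (t3 && (c mod 9 =? 0)) ||
 existsb (fun e => existsb (fun f => let d := 2^e*3^f in (c mod d =? 0) && G ((c / d) mod 24))
   (if t3 then 0::1::nil else 0::nil)) (0::1::2::3::4::nil).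

Lemma mod_sub_mult n D X K : 0 < D -> (D | 1152) -> n - X = D*K -> ((n mod 1152) - X) mod D = 0.
Proof.
 intros HD [w Hw] E. rewrite (Zmod_eq_full n 1152) by lia.
 replace (n - n / 1152 * 1152 - X) with ((K - n/1152 * w) * D) by (rewrite Hw; lia).
 apply Z_mod_mult.
Qed.

Lemma qres_sound t3 G n : Qp t3 G n -> qres t3 G (n mod 1152) = true.
Proof.
 intros [e [f [m [He [Hf [Ht [Hn HG]]]]]]]. unfold qres.
 destruct (Z_lt_le_dec e 5) as [He5|He5].
 2:{ rewrite <- Zmod_div_mod by (try lia; exists 36; lia).
     replace e with (5 + (e - 5)) in Hn by lia. rewrite Z.pow_add_r in Hn by lia.
     rewrite Hn. replace (2 ^ 5 * 2 ^ (e - 5) * 3 ^ f * m) with ((2 ^ (e - 5) * 3 ^ f * m) * 32) by ring.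
     rewrite Z_mod_mult. reflexivity. }
 destruct (Z_lt_le_dec f 2) as [Hf2|Hf2].
 2:{ destruct t3; [|specialize (Ht eq_refl); lia].
     rewrite <- (Zmod_div_mod 9 1152) by (try lia; exists 128; lia).
     replace f with (2 + (f - 2)) in Hn by lia. rewrite Z.pow_add_r in Hn by lia.
     rewrite Hn. replace (2 ^ e * (3 ^ 2 * 3 ^ (f - 2)) * m) with ((2 ^ e * 3 ^ (f - 2) * m) * 9) by ring.
     rewrite Z_mod_mult. rewrite Bool.orb_true_r. reflexivity. }
 apply Bool.orb_true_iff. right. apply existsb_exists. exists e. split.
 { simpl. lia. }
 apply existsb_exists. exists f. split.
 { destruct t3; simpl; [lia|]. specialize (Ht eq_refl). lia. }
 cbv zeta.
 assert (H2e : 0 < 2^e) by (apply Z.pow_pos_nonneg; lia).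
 assert (H3f : 0 < 3^f) by (apply Z.pow_pos_nonneg; lia).
 assert (Hd : (2^e | 2^4)) by (exists (2^(4-e)); rewrite <- Z.pow_add_r by lia; f_equal; lia).
 assert (Hd3 : (3^f | 3^1)) by (exists (3^(1-f)); rewrite <- Z.pow_add_r by lia; f_equal; lia).
 destruct Hd as [x Hx]. destruct Hd3 as [y Hy]. change (2^4) with 16 in Hx. change (3^1) with 3 in Hy.
 assert (Hc : n mod 1152 = (m - 24*x*y*(n/1152)) * (2^e*3^f)).
 { rewrite (Zmod_eq_full n 1152) by lia. rewrite Hn at 1.
   replace ((m - 24*x*y*(n/1152)) * (2^e*3^f)) with (m*(2^e*3^f) - 24*(n/1152)*((x*2^e)*(y*3^f))) by ring.
   rewrite <- Hx, <- Hy. ring. }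
 rewrite Hc, Z_mod_mult, Z_div_mult by nia.
 replace (m - 24*x*y*(n/1152)) with (m + (-(x*y*(n/1152)))*24) by ring.
 rewrite Z_mod_plus_full, HG. reflexivity.
Qed.

Definition final_ok (n2 : Z) (S2 S3 : Z -> bool) (t3 : bool) (G : Z -> bool) : bool :=
 forallb (fun a => negb (S2 (a mod 2^n2) && S3 (a mod 9)) ||
   negb (qres t3 G ((a-2) mod 1152) && qres t3 G ((a+2) mod 1152))) (rng 1152).

Lemma final_sound n2 S2 S3 t3 G a : 0 < 2^n2 -> (2^n2 | 1152) -> final_ok n2 S2 S3 t3 G = true ->
  S2 (a mod 2^n2) = true -> S3 (a mod 9) = true -> qres t3 G ((a-2) mod 1152) = true ->
  qres t3 G ((a+2) mod 1152) = true -> False.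
Proof.
 intros Hp Hd Hc H2 H3 Hq1 Hq2. unfold final_ok in Hc. rewrite forallb_forall in Hc.
 specialize (Hc _ (in_rng _ _ (Z.mod_pos_bound a 1152 ltac:(lia)))).
 rewrite <- Zmod_div_mod in Hc by (try lia; exact Hd).
 rewrite <- (Zmod_div_mod 9 1152) in Hc by (try lia; exists 128; lia).
 rewrite Zminus_mod_idemp_l, Zplus_mod_idemp_l in Hc.
 rewrite H2, H3, Hq1, Hq2 in Hc. discriminate.
Qed.

Definition solZ (k s a b c : Z) := 0 <= a /\ 0 <= b /\ 0 <= c /\ (s = 1 \/ s = -1) /\ a*a + b*b + c*c - s*a*b*c = k.

Lemma to_solZ k x y z : P3 x y z = k -> exists s, solZ k s (Z.abs x) (Z.abs y) (Z.abs z).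
Proof.
 unfold P3, solZ. intros E.
 assert (Hsq : forall u, Z.abs u * Z.abs u = u * u) by (intro u; rewrite <- Z.abs_mul; apply Z.abs_eq; nia).
 assert (Hp : Z.abs x * Z.abs y * Z.abs z = Z.abs (x*y*z)) by (rewrite !Z.abs_mul; reflexivity).
 destruct (Z_le_gt_dec 0 (x*y*z)) as [H|H]; [exists 1|exists (-1)];
  (split; [lia|split; [lia|split; [lia|split; [lia|]]]]).
 - rewrite !Hsq. rewrite Z.mul_1_l, Hp, Z.abs_eq by lia. lia.
 - rewrite !Hsq. replace (-1 * Z.abs x * Z.abs y * Z.abs z) with (- (Z.abs x * Z.abs y * Z.abs z)) by ring.
   rewrite Hp, Z.abs_neq by lia. lia.
Qed.

Lemma min_exists k : (exists s a b c, solZ k s a b c) ->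
  exists s a b c, solZ k s a b c /\ forall s' a' b' c', solZ k s' a' b' c' -> a+b+c <= a'+b'+c'.
Proof.
 intros [s0 [a0 [b0 [c0 H0]]]]. apply NNPP. intro Hno.
 assert (H : forall N : nat, forall s a b c, solZ k s a b c -> Z.of_nat N <= a+b+c).
 { induction N as [|N IH]; intros s a b c Hs.
   - unfold solZ in Hs. lia.
   - assert (Hn : ~ forall s' a' b' c', solZ k s' a' b' c' -> a+b+c <= a'+b'+c').
     { intro Hall. apply Hno. exists s, a, b, c. split; assumption. }
     apply not_all_ex_not in Hn as [s' Hn]. apply not_all_ex_not in Hn as [a' Hn].
     apply not_all_ex_not in Hn as [b' Hn]. apply not_all_ex_not in Hn as [c' Hn].
     apply imply_to_and in Hn as [Hs' Hlt]. specialize (IH s' a' b' c' Hs'). lia. }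
 specialize (H (S (Z.to_nat (a0+b0+c0))) s0 a0 b0 c0 H0). unfold solZ in H0. lia.
Qed.

Lemma solZ_swap12 k s a b c : solZ k s a b c -> solZ k s b a c.
Proof. unfold solZ. intros (?&?&?&?&E). repeat split; try lia; try (rewrite <- E; ring). Qed.
Lemma solZ_swap23 k s a b c : solZ k s a b c -> solZ k s a c b.
Proof. unfold solZ. intros (?&?&?&?&E). repeat split; try lia; try (rewrite <- E; ring). Qed.

Definition minsol k s a b c := solZ k s a b c /\ forall s' a' b' c', solZ k s' a' b' c' -> a+b+c <= a'+b'+c'.
Lemma minsol_swap12 k s a b c : minsol k s a b c -> minsol k s b a c.
Proof. intros [H1 H2]. split; [apply solZ_swap12; auto|]. intros. specialize (H2 _ _ _ _ H). lia. Qed.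
Lemma minsol_swap23 k s a b c : minsol k s a b c -> minsol k s a c b.
Proof. intros [H1 H2]. split; [apply solZ_swap23; auto|]. intros. specialize (H2 _ _ _ _ H). lia. Qed.

Lemma min_sorted k : (exists x y z, P3 x y z = k) -> exists s a b c, minsol k s a b c /\ a <= b <= c.
Proof.
 intros [x [y [z E]]]. destruct (to_solZ k x y z E) as [s Hs].
 destruct (min_exists k) as [s' [a [b [c [H1 H2]]]]]; [eauto|].
 assert (M : minsol k s' a b c) by (split; auto).
 destruct (Z.le_gt_cases a b); destruct (Z.le_gt_cases b c); destruct (Z.le_gt_cases a c).
 - exists s', a, b, c. split; [auto|lia].
 - exists s', a, b, c. split; [auto|lia].
 - exists s', a, c, b. split; [apply minsol_swap23; auto|lia].
 - exists s', c, a, b. split; [apply minsol_swap12, minsol_swap23; auto|lia].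
 - exists s', b, a, c. split; [apply minsol_swap12; auto|lia].
 - exists s', b, c, a. split; [apply minsol_swap23, minsol_swap12; auto|lia].
 - exists s', b, a, c. split; [apply minsol_swap12; auto|lia].
 - exists s', c, b, a. split; [apply minsol_swap12, minsol_swap23, minsol_swap12; auto|lia].
Qed.

Lemma min_cases k s a b c : minsol k s a b c -> a <= b <= c ->
 P3 a b (s*c) = k /\ 0 <= a /\
 ((a = 0 /\ b*b + c*c = k) \/ (a = 1 /\ 1 + b*b + c*c - s*b*c = k) \/ (a = 2 /\ (b - s*c)*(b - s*c) = k - 4) \/
  (3 <= a /\ s = -1 /\ a*a*a < k) \/ (3 <= a /\ s = 1 /\ a*a*(a-3) <= -k)).
Proof.
 intros [[Ha [Hb [Hc [Hs E]]]] Hmin] Hord.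
 split. { unfold P3. destruct Hs; subst s; rewrite <- E; ring. }
 split; [lia|].
 destruct (Z.eq_dec a 0) as [->|H0]. { left. split; [auto|]. rewrite <- E. ring. }
 destruct (Z.eq_dec a 1) as [->|H1]. { right; left. split; [auto|]. rewrite <- E. ring. }
 destruct (Z.eq_dec a 2) as [->|H2]. { right; right; left. split; [auto|]. rewrite <- E.
   destruct Hs; subst s; ring. }
 right; right; right. destruct Hs as [->| ->].
 - right. split; [lia|split; [auto|]].
   destruct (Z_le_gt_dec 0 (a*b - c)) as [Hv|Hv].
   + assert (Hs' : solZ k 1 a b (a*b - c)) by (repeat split; auto; try lia; try (rewrite <- E; ring)).
     specialize (Hmin _ _ _ _ Hs').
     assert (0 <= (c - b)*(a*b - c - b)) by (apply Z.mul_nonneg_nonneg; lia).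
     assert (0 <= (b*b - a*a)*(a - 2)) by (apply Z.mul_nonneg_nonneg; nia).
     rewrite <- E. nia.
   + assert (Hs' : solZ k (-1) a b (c - a*b)) by (repeat split; auto; try lia; try (rewrite <- E; ring)).
     specialize (Hmin _ _ _ _ Hs'). nia.
 - left. split; [lia|split; [auto|]].
   assert (a*a <= a*b) by nia. assert (a*a*a <= a*b*c) by nia. rewrite <- E. nia.
Qed.

Definition loc2e (K : Z) (S : Z -> bool) : bool :=
  let R := rng 64 in
  forallb (fun x => S x || let xx := x*x - K in forallb (fun y => let A := x*y in let B := xx + y*y in
     forallb (fun z => negb (Z.land (z*(z-A)+B) 127 =? 0)) R) R) (rng 128).

Lemma loc2e_sound K S : (forall x, Z.odd x = true -> S x = true) -> loc2e K S = true ->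
  forall x y z, (P3 x y z - K) mod 128 = 0 -> S (x mod 128) = true.
Proof.
 intros Hodd Hc x y z H.
 unfold loc2e in Hc. rewrite forallb_forall in Hc.
 specialize (Hc _ (in_rng _ _ (Z.mod_pos_bound x 128 ltac:(lia)))).
 destruct (S (x mod 128)) eqn:ES; [reflexivity|]. exfalso.
 assert (Hev : Z.odd (x mod 128) = false) by (destruct (Z.odd (x mod 128)) eqn:O; [rewrite (Hodd _ O) in ES; discriminate|reflexivity]).
 rewrite Bool.orb_false_l in Hc. cbv zeta in Hc.
 rewrite forallb_forall in Hc. specialize (Hc _ (in_rng _ _ (Z.mod_pos_bound y 64 ltac:(lia)))).
 rewrite forallb_forall in Hc. specialize (Hc _ (in_rng _ _ (Z.mod_pos_bound z 64 ltac:(lia)))).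
 set (x0 := x mod 128) in *. set (y0 := y mod 64) in *. set (z0 := z mod 64) in *.
 assert (E : Z.land (z0 * (z0 - x0 * y0) + (x0 * x0 - K + y0 * y0)) 127 = 0).
 { replace 127 with (Z.ones 7) by reflexivity. rewrite Z.land_ones by lia. change (2^7) with 128.
   assert (H1 : eqm 128 (P3 x y z - K) (P3 x0 y z - K)) by (unfold x0, P3; eqm_tac).
   assert (Hw' : exists w, x0 = 2*w) by (apply Z.even_spec; rewrite <- Z.negb_odd, Hev; reflexivity).
   destruct Hw' as [w Hw].
   assert (Hy := Z_div_mod_eq_full y 64). assert (Hz := Z_div_mod_eq_full z 64).
   fold y0 in Hy. fold z0 in Hz.
   set (a := y / 64) in *. set (b := z / 64) in *.
   assert (H2 : P3 x0 y z - K = (z0 * (z0 - x0 * y0) + (x0 * x0 - K + y0 * y0)) +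
     (a*y0 + 32*a*a + b*z0 + 32*b*b - w*(a*z0 + b*y0 + 64*a*b)) * 128).
   { rewrite Hy, Hz. unfold P3. rewrite Hw. ring. }
   unfold eqm in H1. rewrite H2, Z_mod_plus_full in H1. rewrite <- H1. exact H. }
 rewrite E in Hc. discriminate.
Qed.

Definition loc9 (K : Z -> bool) (S : Z -> bool) : bool :=
  let R := rng 9 in
  forallb (fun x => S x || forallb (fun y => forallb (fun z => negb (K ((P3 x y z) mod 9))) R) R) R.
Lemma P3_mod N x y z : (P3 x y z) mod N = (P3 (x mod N) (y mod N) (z mod N)) mod N.
Proof. change (eqm N (P3 x y z) (P3 (x mod N) (y mod N) (z mod N))). unfold P3. eqm_tac. Qed.
Lemma loc9_sound K S : loc9 K S = true -> forall x y z, K ((P3 x y z) mod 9) = true -> S (x mod 9) = true.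
Proof.
 intros Hc x y z HK. unfold loc9 in Hc. rewrite forallb_forall in Hc.
 assert (Hx := Hc (x mod 9) (in_rng _ _ (Z.mod_pos_bound x 9 ltac:(lia)))).
 apply Bool.orb_true_iff in Hx as [Hx|Hx]; [exact Hx|].
 rewrite forallb_forall in Hx. specialize (Hx _ (in_rng _ _ (Z.mod_pos_bound y 9 ltac:(lia)))).
 rewrite forallb_forall in Hx. specialize (Hx _ (in_rng _ _ (Z.mod_pos_bound z 9 ltac:(lia)))).
 rewrite <- P3_mod in Hx. rewrite HK in Hx. discriminate.
Qed.

Lemma endgame (r' Bc : Z) (t3 : bool) (G : Z -> bool) n2 S2 S3 k L a b c :
  (forall p A B, prime p -> p <> 2 -> (t3 = true -> p <> 3) -> (p | A*A - r'*B*B) -> ~ (p | B) -> G (p mod 24) = true) ->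
  Gcl G = true -> G 1 = true -> final_ok n2 S2 S3 t3 G = true -> 0 < 2^n2 -> (2^n2 | 1152) ->
  (forall d, 1 < d -> (d | L) -> d = L) ->
  4*(k - 4) = r' * (Bc*L) * (Bc*L) -> (Bc = 2 \/ Bc = 4) ->
  P3 a b c = k -> 3 <= a -> a + 2 < L ->
  S2 (a mod 2^n2) = true -> S3 (a mod 9) = true -> False.
Proof.
 intros Hcl HGc HG1 Hfin Hn2 Hd2 Hpl Hk HBc E Ha HaL HS2 HS3.
 assert (Hid : (2*b - a*c)*(2*b - a*c) - r'*(Bc*L)*(Bc*L) = (a-2)*(a+2)*(c*c-4)).
 { rewrite <- Z.sub_0_r. rewrite <- Hk. unfold P3 in E. rewrite <- E. ring. }
 assert (Hcond : forall n, (n = a - 2 \/ n = a + 2) -> forall p, prime p -> (p | n) -> p <> 2 -> (t3 = true -> p <> 3) -> G (p mod 24) = true).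
 { intros n Hn p Hp Hpn H2 H3. assert (Hp2 := prime_ge_2 p Hp).
   assert (Hple : p <= n) by (apply Z.divide_pos_le; auto; lia).
   apply (Hcl p (2*b - a*c) (Bc*L) Hp H2 H3).
   - rewrite Hid. destruct Hn as [->| ->].
     + apply Z.divide_mul_l, Z.divide_mul_l. exact Hpn.
     + apply Z.divide_mul_l, Z.divide_mul_r. exact Hpn.
   - intro HB. destruct (prime_mult p Hp Bc L HB) as [HB1|HB1].
     + assert (Hp2' : (p | 2)).
       { destruct HBc as [->| ->]; auto. destruct (prime_mult p Hp 2 2) as [?|?]; auto. }
       apply Z.divide_pos_le in Hp2'; lia.
     + specialize (Hpl p ltac:(lia) HB1). lia. }
 assert (Q1 := Q_closure t3 G HGc HG1 (a-2) ltac:(lia) (Hcond (a-2) (or_introl eq_refl))).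
 assert (Q2 := Q_closure t3 G HGc HG1 (a+2) ltac:(lia) (Hcond (a+2) (or_intror eq_refl))).
 apply (final_sound n2 S2 S3 t3 G a Hn2 Hd2 Hfin HS2 HS3 (qres_sound _ _ _ Q1) (qres_sound _ _ _ Q2)).
Qed.

Lemma L_odd L : 13 <= L -> (forall d, 1 < d -> (d | L) -> d = L) -> L mod 2 = 1.
Proof. intros HL Hpl. destruct (Z.eq_dec (L mod 2) 0) as [E|E]; [|assert (H := Z.mod_pos_bound L 2); lia].
 apply Z.mod_divide in E; [|lia]. specialize (Hpl 2 ltac:(lia) E). lia. Qed.
Lemma L_not3 L : 13 <= L -> (forall d, 1 < d -> (d | L) -> d = L) -> L mod 3 <> 0.
Proof. intros HL Hpl E. apply Z.mod_divide in E; [|lia]. specialize (Hpl 3 ltac:(lia) E). lia. Qed.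
Lemma sq_mod8 L : L mod 2 = 1 -> (L*L) mod 8 = 1.
Proof. intros H. rewrite Z.mul_mod by lia.
 assert (Hb : L mod 8 = 1 \/ L mod 8 = 3 \/ L mod 8 = 5 \/ L mod 8 = 7) by (Z.div_mod_to_equations; lia).
 destruct Hb as [->|[->|[->| ->]]]; reflexivity. Qed.
Lemma sq_mod3 L : L mod 3 <> 0 -> (L*L) mod 3 = 1.
Proof. intros H. rewrite Z.mul_mod by lia.
 assert (Hb : L mod 3 = 1 \/ L mod 3 = 2) by (Z.div_mod_to_equations; lia).
 destruct Hb as [->| ->]; reflexivity. Qed.

Definition S2_m2 (x : Z) := Z.odd x || (x mod 8 =? 0).
Lemma l2_m2 : loc2 4 2 S2_m2 = true. Proof. vm_compute. reflexivity. Qed.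
Lemma fin_m2 : final_ok 4 S2_m2 (fun _ => true) false G_m2 = true. Proof. vm_compute. reflexivity. Qed.
Lemma Gcl_m2 : Gcl G_m2 = true. Proof. vm_compute. reflexivity. Qed.

Lemma main_m2 L : 13 <= L -> (forall d, 1 < d -> (d | L) -> d = L) -> ~ exists x y z, P3 x y z = 4 + (-2)*L*L.
Proof.
 intros HL Hpl Hex. set (k := 4 + (-2)*L*L) in *.
 assert (H8 := sq_mod8 L (L_odd L HL Hpl)).
 destruct (min_sorted k Hex) as [s [a [b [c [Hm Hord]]]]].
 destruct (min_cases k s a b c Hm Hord) as [E [Ha Hc]].
 destruct Hm as [[_ [Hb [Hc0 [Hs _]]]] _].
 assert (Hk : k <= 4 - 2*169) by (unfold k; nia).
 destruct Hc as [[_ H]|[[_ H]|[[_ H]|[[_ [_ H]]|[Ha3 [-> H]]]]]].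
 - nia.
 - destruct Hs as [->| ->]; nia.
 - nia.
 - nia.
 - assert (HaL : a + 2 < L).
   { destruct (Z_lt_le_dec (a+2) L) as [?|Hc']; [auto|]. exfalso.
     assert (0 <= (L-2)*(L-2)*(L-5)) by (apply Z.mul_nonneg_nonneg; nia).
     assert ((L-2)*(L-2)*(L-5) <= a*a*(a-3)) by nia. unfold k in H. nia. }
   apply (endgame (-2) 2 false G_m2 4 S2_m2 (fun _ => true) k L a b (1*c)
     (fun p A B Hp H2 _ => class_m2 p A B Hp H2) Gcl_m2 eq_refl fin_m2 ltac:(reflexivity) ltac:(exists 72; reflexivity)
     Hpl ltac:(unfold k; ring) ltac:(left; reflexivity) E Ha3 HaL); [|reflexivity].
   apply (loc2_sound 4 2 S2_m2 ltac:(lia) l2_m2 a b (1*c)). rewrite E. unfold k.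
   Z.div_mod_to_equations. lia.
Qed.

Ltac zmod := Z.div_mod_to_equations; lia.

Definition S2_m3 (x : Z) := negb (x mod 4 =? 2).
Definition S3_m3 (x : Z) := (x mod 3 =? 0) || (x =? 1) || (x =? 8).
Lemma l2_m3 : loc2 3 1 S2_m3 = true. Proof. vm_compute. reflexivity. Qed.
Lemma l3_m3 : loc9 (fun x => x =? 1) S3_m3 = true. Proof. vm_compute. reflexivity. Qed.
Lemma Gcl_m3 : Gcl G_m3 = true. Proof. vm_compute. reflexivity. Qed.
Lemma fin_m3 : final_ok 3 S2_m3 S3_m3 true G_m3 = true. Proof. vm_compute. reflexivity. Qed.

Lemma main_m3 L : 17 <= L -> (forall d, 1 < d -> (d | L) -> d = L) -> ~ exists x y z, P3 x y z = 4 + (-3)*L*L.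
Proof.
 intros HL Hpl Hex. set (k := 4 + (-3)*L*L) in *.
 assert (H8 := sq_mod8 L (L_odd L ltac:(lia) Hpl)).
 assert (H3 := sq_mod3 L (L_not3 L ltac:(lia) Hpl)).
 destruct (min_sorted k Hex) as [s [a [b [c [Hm Hord]]]]].
 destruct (min_cases k s a b c Hm Hord) as [E [Ha Hc]].
 destruct Hm as [[_ [Hb [Hc0 [Hs _]]]] _].
 assert (Hk : k <= 4 - 3*289) by (unfold k; nia).
 destruct Hc as [[_ H]|[[_ H]|[[_ H]|[[_ [_ H]]|[Ha3 [-> H]]]]]].
 - nia.
 - destruct Hs as [->| ->]; nia.
 - nia.
 - nia.
 - assert (HaL : a + 2 < L).
   { destruct (Z_lt_le_dec (a+2) L) as [?|Hc']; [auto|]. exfalso.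
     assert (0 <= (L-2)*(L-2)*(L-5)) by (apply Z.mul_nonneg_nonneg; nia).
     assert ((L-2)*(L-2)*(L-5) <= a*a*(a-3)) by nia. unfold k in H. nia. }
   apply (endgame (-3) 2 true G_m3 3 S2_m3 S3_m3 k L a b (1*c)
     (fun p A B Hp H2 H3 => class_m3 p A B Hp H2 (H3 eq_refl)) Gcl_m3 eq_refl fin_m3 ltac:(reflexivity) ltac:(exists 144; reflexivity)
     Hpl ltac:(unfold k; ring) ltac:(left; reflexivity) E Ha3 HaL).
   + apply (loc2_sound 3 1 S2_m3 ltac:(lia) l2_m3 a b (1*c)). rewrite E. unfold k. zmod.
   + apply (loc9_sound _ S3_m3 l3_m3 a b (1*c)). rewrite E. apply Z.eqb_eq. unfold k. zmod.
Qed.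

Definition S2_m12 (x : Z) := Z.odd x || (x =? 14) || (x =? 18).
Lemma l2_m12 : loc2 5 24 S2_m12 = true. Proof. vm_compute. reflexivity. Qed.
Lemma fin_m12 : final_ok 5 S2_m12 S3_m3 true G_m3 = true. Proof. vm_compute. reflexivity. Qed.

Lemma main_m12 L : 37 <= L -> (forall d, 1 < d -> (d | L) -> d = L) -> ~ exists x y z, P3 x y z = 4 + (-12)*L*L.
Proof.
 intros HL Hpl Hex. set (k := 4 + (-12)*L*L) in *.
 assert (H8 := sq_mod8 L (L_odd L ltac:(lia) Hpl)).
 assert (H3 := sq_mod3 L (L_not3 L ltac:(lia) Hpl)).
 destruct (min_sorted k Hex) as [s [a [b [c [Hm Hord]]]]].
 destruct (min_cases k s a b c Hm Hord) as [E [Ha Hc]].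
 destruct Hm as [[_ [Hb [Hc0 [Hs _]]]] _].
 assert (Hk : k <= 4 - 12*1369) by (unfold k; nia).
 destruct Hc as [[_ H]|[[_ H]|[[_ H]|[[_ [_ H]]|[Ha3 [-> H]]]]]].
 - nia.
 - destruct Hs as [->| ->]; nia.
 - nia.
 - nia.
 - assert (HaL : a + 2 < L).
   { destruct (Z_lt_le_dec (a+2) L) as [?|Hc']; [auto|]. exfalso.
     assert (0 <= (L-2)*(L-2)*(L-5)) by (apply Z.mul_nonneg_nonneg; nia).
     assert ((L-2)*(L-2)*(L-5) <= a*a*(a-3)) by nia. unfold k in H. nia. }
   apply (endgame (-3) 4 true G_m3 5 S2_m12 S3_m3 k L a b (1*c)
     (fun p A B Hp H2 H3 => class_m3 p A B Hp H2 (H3 eq_refl)) Gcl_m3 eq_refl fin_m12 ltac:(reflexivity) ltac:(exists 36; reflexivity)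
     Hpl ltac:(unfold k; ring) ltac:(right; reflexivity) E Ha3 HaL).
   + apply (loc2_sound 5 24 S2_m12 ltac:(lia) l2_m12 a b (1*c)). rewrite E. unfold k. zmod.
   + apply (loc9_sound _ S3_m3 l3_m3 a b (1*c)). rewrite E. apply Z.eqb_eq. unfold k. zmod.
Qed.

Definition S2_p2 (x : Z) := Z.odd x || (x mod 8 =? 4).
Definition S3_p2 (x : Z) := (x mod 3 =? 0).
Lemma l2_p2 : loc2 4 6 S2_p2 = true. Proof. vm_compute. reflexivity. Qed.
Lemma l3_p2 : loc9 (fun x => x mod 3 =? 0) S3_p2 = true. Proof. vm_compute. reflexivity. Qed.
Lemma Gcl_p2 : Gcl G_p2 = true. Proof. vm_compute. reflexivity. Qed.
Lemma fin_p2 : final_ok 4 S2_p2 S3_p2 false G_p2 = true. Proof. vm_compute. reflexivity. Qed.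
Lemma cA_p2 : chk3 8 (fun x y _ => x*x + y*y - 6) (fun _ _ _ => false) = true. Proof. vm_compute. reflexivity. Qed.
Lemma cB_p2 : chk3 3 (fun x y z => 1 + x*x + y*y - z*x*y) (fun _ _ z => z =? 0) = true. Proof. vm_compute. reflexivity. Qed.
Lemma cC_p2 : chk3 16 (fun x _ _ => x*x - 2) (fun _ _ _ => false) = true. Proof. vm_compute. reflexivity. Qed.

Lemma main_p2 L : 13 <= L -> (forall d, 1 < d -> (d | L) -> d = L) -> ~ exists x y z, P3 x y z = 4 + 2*L*L.
Proof.
 intros HL Hpl Hex. set (k := 4 + 2*L*L) in *.
 assert (H8 := sq_mod8 L (L_odd L ltac:(lia) Hpl)).
 assert (H3 := sq_mod3 L (L_not3 L ltac:(lia) Hpl)).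
 destruct (min_sorted k Hex) as [s [a [b [c [Hm Hord]]]]].
 destruct (min_cases k s a b c Hm Hord) as [E [Ha Hc]].
 destruct Hm as [[_ [Hb [Hc0 [Hs _]]]] _].
 destruct Hc as [[_ H]|[[_ H]|[[_ H]|[[Ha3 [-> H]]|[Ha3 [_ H]]]]]].
 - assert (X := chk3_sound 8 _ _ ltac:(lia) cA_p2 ltac:(intros; eqm_tac) b c 0). cbv beta in X.
   exfalso. apply Bool.diff_false_true, X. cbv beta. unfold k in H. zmod.
 - assert (X := chk3_sound 3 _ _ ltac:(lia) cB_p2 ltac:(intros; eqm_tac) b c s). cbv beta in X.
   destruct Hs as [-> | ->]; exfalso; (assert (Y := X ltac:(cbv beta; unfold k in H; zmod)); vm_compute in Y; discriminate Y).
 - assert (X := chk3_sound 16 _ _ ltac:(lia) cC_p2 ltac:(intros; eqm_tac) (b - s*c) 0 0). cbv beta in X.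
   exfalso. apply Bool.diff_false_true, X. cbv beta. unfold k in H. zmod.
 - assert (HaL : a + 2 < L).
   { destruct (Z_lt_le_dec (a+2) L) as [?|Hc']; [auto|]. exfalso.
     assert ((L-2)*(L-2)*(L-2) <= a*a*a) by nia. unfold k in H. nia. }
   apply (endgame 2 2 false G_p2 4 S2_p2 S3_p2 k L a b (-1*c)
     (fun p A B Hp H2 _ => class_p2 p A B Hp H2) Gcl_p2 eq_refl fin_p2 ltac:(reflexivity) ltac:(exists 72; reflexivity)
     Hpl ltac:(unfold k; ring) ltac:(left; reflexivity) E Ha3 HaL).
   + apply (loc2_sound 4 6 S2_p2 ltac:(lia) l2_p2 a b (-1*c)). rewrite E. unfold k. zmod.
   + apply (loc9_sound _ S3_p2 l3_p2 a b (-1*c)). rewrite E. apply Z.eqb_eq. unfold k. zmod.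
 - unfold k in H. nia.
Qed.

Definition S2_p12 (x : Z) := Z.odd x || (x mod 32 =? 10) || (x mod 32 =? 22).
Definition S3_p12 (x : Z) := (x mod 3 =? 0) || (x =? 4) || (x =? 5).
Lemma l2_p12 : loc2e 48 S2_p12 = true. Proof. vm_compute. reflexivity. Qed.
Lemma l3_p12 : loc9 (fun x => x =? 7) S3_p12 = true. Proof. vm_compute. reflexivity. Qed.
Lemma Gcl_p3 : Gcl G_p3 = true. Proof. vm_compute. reflexivity. Qed.
Lemma fin_p12 : final_ok 7 S2_p12 S3_p12 true G_p3 = true. Proof. vm_compute. reflexivity. Qed.
Lemma cA_p12 : chk3 4 (fun x y _ => x*x + y*y) (fun x y _ => (x mod 2 =? 0) && (y mod 2 =? 0)) = true. Proof. vm_compute. reflexivity. Qed.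
Lemma cB_p12 : chk3 9 (fun x y z => 1 + x*x + y*y - z*x*y - 7) (fun _ _ z => negb ((z =? 1) || (z =? 8))) = true. Proof. vm_compute. reflexivity. Qed.
Lemma cC_p12 : chk3 9 (fun x _ _ => x*x - 3) (fun _ _ _ => false) = true. Proof. vm_compute. reflexivity. Qed.

Lemma main_p12 L : 37 <= L -> (forall d, 1 < d -> (d | L) -> d = L) -> (L*L) mod 32 = 25 ->
  (forall u v, 1 + 3*L*L <> u*u + v*v) -> ~ exists x y z, P3 x y z = 4 + 12*L*L.
Proof.
 intros HL Hpl H32 HS Hex. set (k := 4 + 12*L*L) in *.
 assert (H3 := sq_mod3 L (L_not3 L ltac:(lia) Hpl)).
 destruct (min_sorted k Hex) as [s [a [b [c [Hm Hord]]]]].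
 destruct (min_cases k s a b c Hm Hord) as [E [Ha Hc]].
 destruct Hm as [[_ [Hb [Hc0 [Hs _]]]] _].
 destruct Hc as [[_ H]|[[_ H]|[[_ H]|[[Ha3 [-> H]]|[Ha3 [_ H]]]]]].
 - assert (X := chk3_sound 4 _ _ ltac:(lia) cA_p12 ltac:(intros; eqm_tac) b c 0). cbv beta in X.
   rewrite <- !(Zmod_div_mod 2 4) in X by (try lia; exists 2; lia).
   assert (Hbc : b mod 2 = 0 /\ c mod 2 = 0).
   { apply andb_prop in X. rewrite !Z.eqb_eq in X. apply X. unfold k in H. zmod. }
   destruct Hbc as [Hb2 Hc2]. apply Z.mod_divide in Hb2; [|lia]. apply Z.mod_divide in Hc2; [|lia].
   destruct Hb2 as [b' ->]. destruct Hc2 as [c' ->]. apply (HS b' c'). unfold k in H. lia.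
 - assert (X := chk3_sound 9 _ _ ltac:(lia) cB_p12 ltac:(intros; eqm_tac) b c s). cbv beta in X.
   destruct Hs as [-> | ->]; exfalso; (assert (Y := X ltac:(cbv beta; unfold k in H; zmod)); vm_compute in Y; discriminate Y).
 - assert (X := chk3_sound 9 _ _ ltac:(lia) cC_p12 ltac:(intros; eqm_tac) (b - s*c) 0 0). cbv beta in X.
   exfalso. apply Bool.diff_false_true, X. cbv beta. unfold k in H. zmod.
 - assert (HaL : a + 2 < L).
   { destruct (Z_lt_le_dec (a+2) L) as [?|Hc']; [auto|]. exfalso.
     assert ((L-2)*(L-2)*(L-2) <= a*a*a) by nia. unfold k in H. nia. }
   apply (endgame 3 4 true G_p3 7 S2_p12 S3_p12 k L a b (-1*c)
     (fun p A B Hp H2 H3 => class_p3 p A B Hp H2 (H3 eq_refl)) Gcl_p3 eq_refl fin_p12 ltac:(reflexivity) ltac:(exists 9; reflexivity)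
     Hpl ltac:(unfold k; ring) ltac:(right; reflexivity) E Ha3 HaL).
   + apply (loc2e_sound 48 S2_p12 ltac:(intros x Hx; unfold S2_p12; rewrite Hx; reflexivity) l2_p12 a b (-1*c)). rewrite E. unfold k. zmod.
   + apply (loc9_sound _ S3_p12 l3_p12 a b (-1*c)). rewrite E. apply Z.eqb_eq. unfold k. zmod.
 - unfold k in H. nia.
Qed.

End ZD.

Require Import Defs.
From mathcomp Require Import all_boot all_algebra.
From mathcomp Require Import zify ssrZ.
Import GRing.Theory.
Local Open Scope ring_scope.

Section Bridge.
Local Open Scope Z_scope.

Lemma br (r : int) (l : nat) : has_int_sol r l ->
  exists x y z : Z, ZD.P3 x y z = 4 + Z_of_int r * Z.of_nat l * Z.of_nat l.
Proof.
 move=> [x [y [z E]]]. exists (Z_of_int x), (Z_of_int y), (Z_of_int z).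
 rewrite /ZD.P3. rewrite !expr2 in E. lia.
Qed.

Lemma prime_lite (l : nat) : prime l -> forall d : Z, 1 < d -> (d | Z.of_nat l) -> d = Z.of_nat l.
Proof.
 move=> /primeP [Hl1 Hdiv] d Hd [q Hq].
 have Hq0 : 0 < q by nia.
 have Hdn : (Z.to_nat d %| l)%N.
 { apply/dvdnP. exists (Z.to_nat q). apply: Nat2Z.inj. rewrite Nat2Z.inj_mul !Z2Nat.id; lia. }
 case/orP: (Hdiv _ Hdn) => /eqP H; lia.
Qed.

Lemma nsq (l : nat) : ~ sum_two_sq (1 + 3 * (l%:Z) ^+ 2)%R ->
  forall u v : Z, 1 + 3 * Z.of_nat l * Z.of_nat l <> u*u + v*v.
Proof.
 move=> H u v E. apply: H. exists (int_of_Z u), (int_of_Z v). rewrite !expr2. lia.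
Qed.

Lemma l32 (l : nat) : (l ^ 2 %% 32 == 25)%N -> (Z.of_nat l * Z.of_nat l) mod 32 = 25.
Proof. move=> /eqP H. rewrite (expnS l 1) expn1 in H. zify. Z.div_mod_to_equations. nia. Qed.


Lemma case_p2 (l : nat) : prime l -> (13 <= l)%N -> ~ has_int_sol 2%R l.
Proof. move=> Hp Hl Hs. have [x [y [z E]]] := br _ _ Hs.
 have H := ZD.main_p2 (Z.of_nat l) ltac:(lia) (prime_lite l Hp). apply: H. exists x, y, z. rewrite E. reflexivity. Qed.
Lemma case_p12 (l : nat) : prime l -> (37 <= l)%N -> (l ^ 2 %% 32 == 25)%N ->
     ~ sum_two_sq (1 + 3 * (l%:Z) ^+ 2)%R -> ~ has_int_sol 12%R l.
Proof. move=> Hp Hl H32 HS Hs. have [x [y [z E]]] := br _ _ Hs.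
 have H := ZD.main_p12 (Z.of_nat l) ltac:(lia) (prime_lite l Hp) (l32 l H32) (nsq l HS). apply: H. exists x, y, z. rewrite E. reflexivity. Qed.
Lemma case_m2 (l : nat) : prime l -> (13 <= l)%N -> ~ has_int_sol (-2)%R l.
Proof. move=> Hp Hl Hs. have [x [y [z E]]] := br _ _ Hs.
 have H := ZD.main_m2 (Z.of_nat l) ltac:(lia) (prime_lite l Hp). apply: H. exists x, y, z. rewrite E. reflexivity. Qed.
Lemma case_m3 (l : nat) : prime l -> (17 <= l)%N -> ~ has_int_sol (-3)%R l.
Proof. move=> Hp Hl Hs. have [x [y [z E]]] := br _ _ Hs.
 have H := ZD.main_m3 (Z.of_nat l) ltac:(lia) (prime_lite l Hp). apply: H. exists x, y, z. rewrite E. reflexivity. Qed.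
Lemma case_m12 (l : nat) : prime l -> (37 <= l)%N -> ~ has_int_sol (-12)%R l.
Proof. move=> Hp Hl Hs. have [x [y [z E]]] := br _ _ Hs.
 have H := ZD.main_m12 (Z.of_nat l) ltac:(lia) (prime_lite l Hp). apply: H. exists x, y, z. rewrite E. reflexivity. Qed.

End Bridge.

Theorem proposition5p12 :
  (forall l : nat, prime l -> (13 <= l)%N ->
     (l %% 9 == 4)%N || (l %% 9 == 5)%N -> ~ has_int_sol 2 l) /\
  (forall l : nat, prime l -> (37 <= l)%N -> (l ^ 2 %% 32 == 25)%N ->
     ~ sum_two_sq (1 + 3 * (l%:Z) ^+ 2) -> ~ has_int_sol 12 l) /\
  (forall l : nat, prime l -> (13 <= l)%N -> ~ has_int_sol (-2) l) /\
  (forall l : nat, prime l -> (17 <= l)%N -> ~ has_int_sol (-3) l) /\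
  (forall l : nat, prime l -> (37 <= l)%N -> ~ has_int_sol (-12) l).
Proof.
 split; [|split; [|split; [|split]]].
 - move=> l Hp Hl _. exact: case_p2.
 - exact: case_p12.
 - exact: case_m2.
 - exact: case_m3.
 - exact: case_m12.
Qed.
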